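(* Let $m>n>0$ and $c>0$ be constants. Let $f,g\in C(\mathbb{R}_0^+,\mathbb{R}_0^+)$, let $w\in C(\mathbb{R}_0^+,\mathbb{R}_0^+)$ be nondecreasing with $w(x)>0$ for $x>0$, and let $\alpha\in C^1(\mathbb{R}_0^+,\mathbb{R}_0^+)$ be nondecreasing with $\alpha(t)\le t$. If $u\in C(\mathbb{R}_0^+,\mathbb{R}_0^+)$ satisfies $$u^m(t)\le c^{m/(m-n)}+\frac{m}{m-n}\int_0^{\alpha(t)}\big[f(s)u^n(s)w(u(s))+g(s)u^n(s)\big]\,ds\qquad\text{for all }t\ge0,$$ then there exists $\tau>0$ such that for all $t\in[0,\tau]$, $$\Psi\Big(c+\int_0^{\alpha(t)}g(s)\,ds\Big)+\int_0^{\alpha(t)}f(s)\,ds\in\mathrm{Dom}(\Psi^{-1})$$ and $$u(t)\le\Big\{\Psi^{-1}\Big[\Psi\Big(c+\int_0^{\alpha(t)}g(s)\,ds\Big)+\int_0^{\alpha(t)}f(s)\,ds\Big]\Big\}^{1/(m-n)},$$ where $\Psi(x)=\int_1^x\frac{ds}{w(s^{1/(m-n)})}$ for $x>0$.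
   Context: $\mathbb{R}_0^+=[0,\infty)$. $\Psi$ is strictly increasing on $(0,\infty)$, $\Psi^{-1}$ denotes its inverse, and $\mathrm{Dom}(\Psi^{-1})=\Psi((0,\infty))$. *)

(* Defs.v *)
From Stdlib Require Import Reals Lra ClassicalEpsilon.
Open Scope R_scope.

(* Real power with the convention 0^a = 0 (used for a > 0 only);
   Stdlib's Rpower 0 a = 1 would be wrong at 0. *)
Definition rpow (x a : R) : R := if Req_EM_T x 0 then 0 else Rpower x a.

(* Riemann integral of f over [a,b] (oriented); 0 if not integrable.
   The value of RiemannInt does not depend on the integrability proof. *)
Definition Rint (f : R -> R) (a b : R) : R :=
  match excluded_middle_informative (inhabited (Riemann_integrable f a b)) with
  | left H => RiemannInt (epsilon H (fun _ => True))
  | right _ => 0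
  end.

Definition nonneg (x : R) : Prop := 0 <= x.

(* f in C(R_0^+, R_0^+): continuous on [0,oo) (one-sided at 0), nonnegative values. *)
Definition C_nonneg (f : R -> R) : Prop :=
  (forall x, 0 <= x -> continue_in f nonneg x) /\ (forall x, 0 <= x -> 0 <= f x).

Definition nondecreasing_nonneg (f : R -> R) : Prop :=
  forall x y, 0 <= x -> x <= y -> f x <= f y.

(* alpha in C^1(R_0^+, R_0^+): derivative (one-sided at 0) exists on [0,oo)
   and is continuous there, values nonnegative. *)
Definition C1_nonneg (f : R -> R) : Prop :=
  C_nonneg f /\
  exists f' : R -> R,
    (forall x, 0 <= x -> continue_in f' nonneg x) /\
    (forall x, 0 <= x ->
       limit1_in (fun h => (f (x + h) - f x) / h)
                 (fun h => h <> 0 /\ 0 <= x + h) (f' x) 0).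

Definition Psi (m n : R) (w : R -> R) (x : R) : R :=
  Rint (fun s => / w (rpow s (1 / (m - n)))) 1 x.

Definition PsiDom (m n : R) (w : R -> R) (v : R) : Prop :=
  exists y, 0 < y /\ Psi m n w y = v.

(* Psi^{-1}(v): the (unique, Psi being strictly increasing) y > 0 with Psi y = v. *)
Definition Psi_inv (m n : R) (w : R -> R) (v : R) : R :=
  epsilon (inhabits 0) (fun y => 0 < y /\ Psi m n w y = v).

(* Main.v *)
Require Import Defs.
From Stdlib Require Import Reals Lra Psatz ClassicalEpsilon Ranalysis5.
Open Scope R_scope.

Lemma dlim_ext_loc_aux (f g : R->R) a b x l : a < x < b ->
  (forall y, a < y < b -> f y = g y) -> derivable_pt_lim g x l -> derivable_pt_lim f x l.
Proof.
  intros Hx Heq H eps Heps. destruct (H eps Heps) as [d Hd].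
  assert (Hp: 0 < Rmin d (Rmin (x-a) (b-x))).
  { apply Rmin_pos. apply cond_pos. apply Rmin_pos; lra. }
  exists (mkposreal _ Hp). intros h Hh0 Hh. simpl in Hh.
  assert (H1 := Rmin_l d (Rmin (x-a) (b-x))).
  assert (H2 := Rmin_r d (Rmin (x-a) (b-x))).
  assert (H3 := Rmin_l (x-a) (b-x)). assert (H4 := Rmin_r (x-a) (b-x)).
  assert (Hab: -(Rmin d (Rmin (x-a) (b-x))) < h < Rmin d (Rmin (x-a) (b-x))).
  { unfold Rabs in Hh; destruct (Rcase_abs h); lra. }
  rewrite !Heq; try lra. apply Hd; auto. lra.
Qed.

Lemma cont_ext_loc (f g : R->R) a b x : a < x < b ->
  (forall y, a < y < b -> f y = g y) -> continuity_pt g x -> continuity_pt f x.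
Proof.
  intros Hx Heq H eps Heps. destruct (H eps Heps) as [d [Hd Hd2]].
  exists (Rmin d (Rmin (x-a) (b-x))). split.
  { apply Rmin_pos. lra. apply Rmin_pos; lra. }
  intros y [_ Hy]. simpl in *; unfold R_dist in *.
  assert (H1 := Rmin_l d (Rmin (x-a) (b-x))).
  assert (H2 := Rmin_r d (Rmin (x-a) (b-x))).
  assert (H3 := Rmin_l (x-a) (b-x)). assert (H4 := Rmin_r (x-a) (b-x)).
  assert (Hab: -(Rmin d (Rmin (x-a) (b-x))) < y - x < Rmin d (Rmin (x-a) (b-x))).
  { unfold Rabs in Hy; destruct (Rcase_abs (y-x)); lra. }
  rewrite !Heq; try lra. destruct (Req_dec y x) as [->|Hne].
  - rewrite Rminus_diag, Rabs_R0. lra.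
  - apply Hd2. split. split. exact I. intro E; apply Hne; auto. unfold R_dist. lra.
Qed.

Lemma cont_ext0 (f : R -> R) : (forall x, 0 <= x -> continue_in f Defs.nonneg x) ->
  continuity (fun x => f (Rmax 0 x)).
Proof.
  intros H x0 eps Heps.
  assert (Hx1 : 0 <= Rmax 0 x0) by apply Rmax_l.
  destruct (H _ Hx1 eps Heps) as [d [Hd Hd2]].
  exists d. split; auto. intros y [_ Hy]. simpl in *; unfold R_dist in *.
  assert (Hm : Rabs (Rmax 0 y - Rmax 0 x0) <= Rabs (y - x0)).
  { unfold Rmax; destruct (Rle_dec 0 y); destruct (Rle_dec 0 x0);
    unfold Rabs; repeat destruct Rcase_abs; lra. }
  destruct (Req_dec (Rmax 0 y) (Rmax 0 x0)) as [He|Hne].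
  - rewrite He, Rminus_diag, Rabs_R0. lra.
  - apply Hd2. split. split. unfold Defs.nonneg; apply Rmax_l. intro E; apply Hne; auto.
    unfold R_dist. lra.
Qed.

Lemma Rint_eq {f a b} (pr : Riemann_integrable f a b) : Rint f a b = RiemannInt pr.
Proof.
  unfold Rint. destruct (excluded_middle_informative _) as [H|H].
  - apply RiemannInt_P5.
  - exfalso; apply H; exact (inhabits pr).
Qed.

Lemma integ_cont f a b : (forall z, Rmin a b <= z <= Rmax a b -> continuity_pt f z) ->
  Riemann_integrable f a b.
Proof.
  intros H. destruct (Rle_dec a b) as [Hab|Hab].
  - apply continuity_implies_RiemannInt; auto. intros z Hz; apply H.
    rewrite Rmin_left, Rmax_right; auto.
  - apply RiemannInt_P1. apply continuity_implies_RiemannInt; [lra|].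
    intros z Hz; apply H. rewrite Rmin_right, Rmax_left; lra.
Qed.

Lemma FTC_loc f a b c x : a < b -> (forall z, a <= z <= b -> continuity_pt f z) ->
  a <= c <= b -> a < x < b -> derivable_pt_lim (fun z => Rint f c z) x (f x).
Proof.
  intros Hab C0 Hc Hx.
  assert (h : a <= b) by lra.
  assert (HP : forall z (Hz1 : a <= z) (Hz2 : z <= b), primitive h (FTC_P1 h C0) z = RiemannInt (FTC_P1 h C0 Hz1 Hz2)).
  { intros z Hz1 Hz2. unfold primitive.
    destruct (Rle_dec a z) as [r|r]; [|contradiction]. destruct (Rle_dec z b) as [r0|r0]; [|contradiction].
    apply RiemannInt_P5. }
  apply dlim_ext_loc_aux with (g := fun z => primitive h (FTC_P1 h C0) z - primitive h (FTC_P1 h C0) c) (a := a) (b := b); auto.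
  - intros y Hy.
    assert (Hcy : Riemann_integrable f c y).
    { apply integ_cont. intros z Hz; apply C0.
      split; [apply Rle_trans with (Rmin c y) | apply Rle_trans with (Rmax c y)]; try tauto.
      apply Rmin_glb; lra. apply Rmax_lub; lra. }
    assert (Hca : Riemann_integrable f c a).
    { apply RiemannInt_P1. apply (FTC_P1 h C0); lra. }
    rewrite (Rint_eq Hcy). rewrite <- (RiemannInt_P26 Hca (FTC_P1 h C0 (Rlt_le _ _ (proj1 Hy)) (Rlt_le _ _ (proj2 Hy))) Hcy).
    destruct Hc as [Hc1 Hc2].
    rewrite (HP y (Rlt_le _ _ (proj1 Hy)) (Rlt_le _ _ (proj2 Hy))), (HP c Hc1 Hc2).
    rewrite (RiemannInt_P8 Hca (FTC_P1 h C0 Hc1 Hc2)). ring.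
  - replace (f x) with (f x - 0) by ring.
    apply (derivable_pt_lim_minus (primitive h (FTC_P1 h C0)) (fun _ => primitive h (FTC_P1 h C0) c)).
    apply RiemannInt_P28; lra. apply derivable_pt_lim_const.
Qed.

Lemma Rint_ext0 f g x : 0 <= x -> (forall s, 0 <= s <= x -> f s = g s) -> continuity g ->
  Rint f 0 x = Rint g 0 x.
Proof.
  intros Hx Heq Hg.
  assert (pg : Riemann_integrable g 0 x) by (apply continuity_implies_RiemannInt; auto).
  assert (pf : Riemann_integrable f 0 x).
  { apply Riemann_integrable_ext with g; auto. intros s Hs. symmetry; apply Heq.
    rewrite Rmin_left, Rmax_right in Hs; auto. }
  rewrite (Rint_eq pf), (Rint_eq pg). apply RiemannInt_P18; auto.
  intros s Hs; apply Heq; lra.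
Qed.

Lemma FTC_glob g x : continuity g -> derivable_pt_lim (fun z => Rint g 0 z) x (g x).
Proof.
  intros Hg. apply FTC_loc with (a := Rmin 0 x - 1) (b := Rmax 0 x + 1).
  - assert (H1 := Rmin_l 0 x); assert (H2 := Rmax_l 0 x); lra.
  - intros; apply Hg.
  - assert (H1 := Rmin_l 0 x); assert (H2 := Rmax_l 0 x); lra.
  - assert (H1 := Rmin_r 0 x); assert (H2 := Rmax_r 0 x); lra.
Qed.

Lemma mono_deriv F F' a b : a <= b -> (forall z, a <= z <= b -> derivable_pt_lim F z (F' z)) ->
  (forall z, a <= z <= b -> F' z <= 0) -> F b <= F a.
Proof.
  intros Hab HD HF. destruct (Req_dec a b) as [->|Hne]; [lra|].
  destruct (MVT_cor2 F F' a b) as [z [Hz1 Hz2]]; [lra|auto|].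
  assert (F' z <= 0) by (apply HF; lra).
  assert (F' z * (b - a) <= 0). { nra. }
  lra.
Qed.

Lemma mono_deriv_pos F F' a b : a < b -> (forall z, a <= z <= b -> derivable_pt_lim F z (F' z)) ->
  (forall z, a <= z <= b -> 0 < F' z) -> F a < F b.
Proof.
  intros Hab HD HF.
  destruct (MVT_cor2 F F' a b) as [z [Hz1 Hz2]]; [lra|auto|].
  assert (0 < F' z) by (apply HF; lra).
  assert (0 < F' z * (b - a)). { apply Rmult_lt_0_compat; lra. }
  lra.
Qed.

Lemma dlim_cont f x l : derivable_pt_lim f x l -> continuity_pt f x.
Proof. intros H. apply (derivable_continuous_pt f x (exist _ l H)). Qed.

Lemma rpow_pos x a : 0 < x -> rpow x a = Rpower x a.
Proof. intros H. unfold rpow. destruct (Req_EM_T x 0); [lra|auto]. Qed.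

Lemma Rpower_gt0 x a : 0 < Rpower x a.
Proof. unfold Rpower. apply exp_pos. Qed.

Lemma rpow_nonneg x a : 0 <= rpow x a.
Proof. unfold rpow. destruct (Req_EM_T x 0); [lra|]. left; apply Rpower_gt0. Qed.

Lemma rpow_nonneg_pos x a : 0 < x -> 0 < rpow x a.
Proof. intros H; rewrite rpow_pos; auto; apply Rpower_gt0. Qed.

Lemma cont_Rpower x a : 0 < x -> continuity_pt (fun y => Rpower y a) x.
Proof. intros H. eapply dlim_cont. apply derivable_pt_lim_power; auto. Qed.

Lemma cont_rpow_pos x a : 0 < x -> continuity_pt (fun y => rpow y a) x.
Proof.
  intros H. apply cont_ext_loc with (g := fun y => Rpower y a) (a := 0) (b := x + 1).
  lra. intros; apply rpow_pos; lra. apply cont_Rpower; auto.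
Qed.

Lemma cont_P n : 0 < n -> continuity (fun x => rpow (Rmax 0 x) n).
Proof.
  intros Hn x0. destruct (Rlt_le_dec 0 x0) as [Hx|Hx].
  - apply cont_ext_loc with (g := fun y => rpow y n) (a := 0) (b := x0 + 1).
    lra. intros y Hy; rewrite Rmax_right; lra. apply cont_rpow_pos; auto.
  - intros eps Heps. exists (Rpower eps (1 / n)). split. apply Rpower_gt0.
    intros y [_ Hy]. simpl in *; unfold R_dist in *.
    rewrite (Rmax_left 0 x0 Hx). unfold rpow at 2. destruct (Req_EM_T 0 0); [|lra].
    rewrite Rminus_0_r.
    destruct (Rle_lt_dec y 0) as [Hy0|Hy0].
    + rewrite Rmax_left; auto. unfold rpow. destruct (Req_EM_T 0 0); [|lra].
      rewrite Rabs_R0; lra.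
    + rewrite Rmax_right by lra. rewrite rpow_pos by lra.
      rewrite Rabs_right by (left; apply Rpower_gt0).
      assert (Hyd : y < Rpower eps (1/n)).
      { unfold Rabs in Hy; destruct Rcase_abs in Hy; lra. }
      apply Rlt_le_trans with (Rpower (Rpower eps (1/n)) n).
      apply Rlt_Rpower_l; lra.
      rewrite Rpower_mult. replace (1 / n * n) with 1 by (field; lra).
      rewrite Rpower_1; lra.
Qed.

Lemma cont_comp (f g : R -> R) : continuity f -> continuity g -> continuity (fun x => g (f x)).
Proof. intros Hf Hg x. exact (continuity_pt_comp f g x (Hf x) (Hg (f x))). Qed.
Lemma cont_plus (f g : R -> R) : continuity f -> continuity g -> continuity (fun x => f x + g x).
Proof. intros Hf Hg x. exact (continuity_pt_plus f g x (Hf x) (Hg x)). Qed.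
Lemma cont_mult (f g : R -> R) : continuity f -> continuity g -> continuity (fun x => f x * g x).
Proof. intros Hf Hg x. exact (continuity_pt_mult f g x (Hf x) (Hg x)). Qed.

Lemma cont_eps f x eps : continuity_pt f x -> 0 < eps ->
  exists d, 0 < d /\ forall y, Rabs (y - x) < d -> Rabs (f y - f x) < eps.
Proof.
  intros H Heps. destruct (H eps Heps) as [d [Hd Hd2]]. exists d. split; [lra|].
  intros y Hy. destruct (Req_dec y x) as [->|Hne].
  - rewrite Rminus_diag, Rabs_R0; lra.
  - apply Hd2. split. split. exact I. intro E; apply Hne; auto. exact Hy.
Qed.

Lemma w_cont_pos (w : R -> R) z : (forall x, 0 <= x -> continue_in w Defs.nonneg x) -> 0 < z ->
  continuity_pt w z.
Proof.
  intros Hw Hz. apply cont_ext_loc with (g := fun x => w (Rmax 0 x)) (a := 0) (b := z + 1).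
  lra. intros y Hy; rewrite Rmax_right; lra. apply cont_ext0; auto.
Qed.

Section PsiSec.
Variables (m n : R) (w : R -> R).
Hypothesis Hp : 0 < m - n.
Hypothesis Hwc : forall x, 0 <= x -> continue_in w Defs.nonneg x.
Hypothesis Hwpos : forall x, 0 < x -> w x > 0.

Definition kk (s : R) := / w (rpow s (1 / (m - n))).

Lemma kk_pos s : 0 < s -> 0 < kk s.
Proof.
  intros Hs. unfold kk. apply Rinv_0_lt_compat. apply Hwpos.
  rewrite rpow_pos by lra. apply Rpower_gt0.
Qed.

Lemma kk_cont s : 0 < s -> continuity_pt kk s.
Proof.
  intros Hs.
  assert (H1 : continuity_pt (fun s => w (rpow s (1 / (m - n)))) s).
  { exact (continuity_pt_comp (fun s => rpow s (1 / (m - n))) w s (cont_rpow_pos s _ Hs)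
      (w_cont_pos w _ Hwc (rpow_nonneg_pos s (1 / (m - n)) Hs))). }
  exact (continuity_pt_inv _ s H1 (Rgt_not_eq _ _ (Hwpos _ (rpow_nonneg_pos s (1 / (m - n)) Hs)))).
Qed.

Lemma Psi_deriv y : 0 < y -> derivable_pt_lim (Psi m n w) y (kk y).
Proof.
  intros Hy. unfold Psi.
  assert (H1 := Rmin_l 1 y); assert (H2 := Rmin_r 1 y);
  assert (H3 := Rmax_l 1 y); assert (H4 := Rmax_r 1 y).
  assert (H5 : 0 < Rmin 1 y) by (apply Rmin_pos; lra).
  apply (FTC_loc kk (Rmin 1 y / 2) (Rmax 1 y + 1)); try lra.
  intros z Hz; apply kk_cont; lra.
Qed.

Lemma Psi_cont y : 0 < y -> continuity_pt (Psi m n w) y.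
Proof. intros Hy; eapply dlim_cont; apply Psi_deriv; auto. Qed.

Lemma Psi_strict a b : 0 < a -> a < b -> Psi m n w a < Psi m n w b.
Proof.
  intros Ha Hab. apply (mono_deriv_pos _ kk); auto.
  intros z Hz; apply Psi_deriv; lra. intros z Hz; apply kk_pos; lra.
Qed.

Lemma Psi_le_inv a b : 0 < a -> 0 < b -> Psi m n w a <= Psi m n w b -> a <= b.
Proof.
  intros Ha Hb H. destruct (Rle_lt_dec a b) as [|Hlt]; auto.
  assert (H' := Psi_strict b a Hb Hlt). lra.
Qed.

Lemma Psi_mono a b : 0 < a -> a <= b -> Psi m n w a <= Psi m n w b.
Proof.
  intros Ha Hab. destruct (Req_dec a b) as [->|Hne]; [lra|].
  left; apply Psi_strict; lra.
Qed.
End PsiSec.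

Lemma d_plus f g x a b : derivable_pt_lim f x a -> derivable_pt_lim g x b ->
  derivable_pt_lim (fun y => f y + g y) x (a + b).
Proof. intros H1 H2. exact (derivable_pt_lim_plus f g x a b H1 H2). Qed.
Lemma d_minus f g x a b : derivable_pt_lim f x a -> derivable_pt_lim g x b ->
  derivable_pt_lim (fun y => f y - g y) x (a - b).
Proof. intros H1 H2. exact (derivable_pt_lim_minus f g x a b H1 H2). Qed.
Lemma d_scal K f x a : derivable_pt_lim f x a -> derivable_pt_lim (fun y => K * f y) x (K * a).
Proof. intros H1. exact (derivable_pt_lim_scal f K x a H1). Qed.
Lemma d_const K x : derivable_pt_lim (fun _ => K) x 0.
Proof. exact (derivable_pt_lim_const K x). Qed.
Lemma d_comp f g x a b : derivable_pt_lim f x a -> derivable_pt_lim g (f x) b ->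
  derivable_pt_lim (fun y => g (f y)) x (b * a).
Proof. intros H1 H2. exact (derivable_pt_lim_comp f g x a b H1 H2). Qed.
Lemma d_val f x l l' : derivable_pt_lim f x l -> l = l' -> derivable_pt_lim f x l'.
Proof. intros H ->; auto. Qed.

Lemma mono_deriv_ge F F' a b : a <= b -> (forall z, a <= z <= b -> derivable_pt_lim F z (F' z)) ->
  (forall z, a <= z <= b -> 0 <= F' z) -> F a <= F b.
Proof.
  intros Hab HD HF. destruct (Req_dec a b) as [->|Hne]; [lra|].
  destruct (MVT_cor2 F F' a b) as [z [Hz1 Hz2]]; [lra|auto|].
  assert (0 <= F' z) by (apply HF; lra).
  assert (0 <= F' z * (b - a)) by nra.
  lra.
Qed.

Lemma Rint_00 g : continuity g -> Rint g 0 0 = 0.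
Proof.
  intros Hg. assert (pr : Riemann_integrable g 0 0) by (apply continuity_implies_RiemannInt; [lra|auto]).
  rewrite (Rint_eq pr). apply RiemannInt_P9.
Qed.

Lemma root_bound U M Zv : 0 < M -> 0 <= U -> 0 < Zv -> rpow U M <= Zv -> U <= Rpower Zv (1 / M).
Proof.
  intros HM HU HZ H. destruct (Req_dec U 0) as [->|HU0].
  - left; apply Rpower_gt0.
  - rewrite rpow_pos in H by lra.
    assert (H2 : Rpower (Rpower U M) (1/M) <= Rpower Zv (1/M)).
    { apply Rle_Rpower_l. left; apply Rdiv_lt_0_compat; lra. split; auto. apply Rpower_gt0. }
    rewrite Rpower_mult in H2. replace (M * (1/M)) with 1 in H2 by (field; lra).
    rewrite Rpower_1 in H2; lra.
Qed.

Theorem corollary1 (m n c : R) (f g w alpha u : R -> R)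
  (Hmn : m > n) (Hn : n > 0) (Hc : c > 0)
  (Hf : C_nonneg f) (Hg : C_nonneg g)
  (Hw : C_nonneg w) (Hwmono : nondecreasing_nonneg w)
  (Hwpos : forall x, 0 < x -> w x > 0)
  (Ha : C1_nonneg alpha) (Hamono : nondecreasing_nonneg alpha)
  (Hale : forall t, 0 <= t -> alpha t <= t)
  (Hu : C_nonneg u)
  (Hineq : forall t, 0 <= t ->
     rpow (u t) m <= Rpower c (m / (m - n))
       + m / (m - n) * Rint (fun s => f s * rpow (u s) n * w (u s)
                                      + g s * rpow (u s) n) 0 (alpha t)) :
  exists tau, tau > 0 /\
    forall t, 0 <= t <= tau ->
      PsiDom m n w (Psi m n w (c + Rint g 0 (alpha t)) + Rint f 0 (alpha t)) /\
      u t <= rpow (Psi_inv m n w (Psi m n w (c + Rint g 0 (alpha t))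
                                  + Rint f 0 (alpha t))) (1 / (m - n)).
Proof.
  destruct Hf as [Hfc Hf0]. destruct Hg as [Hgc Hg0]. destruct Hw as [Hwc Hw0].
  destruct Hu as [Huc Hu0]. destruct Ha as [[_ Ha0] _].
  assert (Hp : 0 < m - n) by lra. assert (Hm : 0 < m) by lra.
  pose (ft := fun x => f (Rmax 0 x)). pose (gt := fun x => g (Rmax 0 x)).
  pose (wt := fun x => w (Rmax 0 x)). pose (ut := fun x => u (Rmax 0 x)).
  pose (Pn := fun x => rpow (Rmax 0 x) n).
  assert (Cft : continuity ft) by (apply cont_ext0; auto).
  assert (Cgt : continuity gt) by (apply cont_ext0; auto).
  assert (Cwt : continuity wt) by (apply cont_ext0; auto).
  assert (Cut : continuity ut) by (apply cont_ext0; auto).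
  assert (CPn : continuity Pn) by (apply cont_P; lra).
  pose (ht := fun x => ft x * Pn (ut x) * wt (ut x) + gt x * Pn (ut x)).
  assert (Cht : continuity ht).
  { unfold ht. apply cont_plus. apply cont_mult. apply cont_mult; auto.
    apply (cont_comp ut Pn); auto. apply (cont_comp ut wt); auto.
    apply cont_mult; auto. apply (cont_comp ut Pn); auto. }
  assert (Hmax : forall x, 0 <= x -> Rmax 0 x = x) by (intros; apply Rmax_right; auto).
  assert (Hmax0 : forall x, 0 <= Rmax 0 x) by (intros; apply Rmax_l).
  assert (Hht : forall x, 0 <= x -> ht x = f x * rpow (u x) n * w (u x) + g x * rpow (u x) n).
  { intros x Hx. unfold ht, ft, gt, wt, ut, Pn. rewrite (Hmax x Hx). rewrite (Hmax (u x) (Hu0 x Hx)). reflexivity. }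
  assert (Hht0 : forall x, 0 <= ht x).
  { intros x. unfold ht, ft, gt, wt, ut, Pn.
    assert (0 <= f (Rmax 0 x)) by auto. assert (0 <= g (Rmax 0 x)) by auto.
    assert (0 <= w (Rmax 0 (u (Rmax 0 x)))) by auto.
    assert (0 <= rpow (Rmax 0 (u (Rmax 0 x))) n) by apply rpow_nonneg.
    assert (0 <= f (Rmax 0 x) * rpow (Rmax 0 (u (Rmax 0 x))) n) by (apply Rmult_le_pos; auto).
    assert (0 <= f (Rmax 0 x) * rpow (Rmax 0 (u (Rmax 0 x))) n * w (Rmax 0 (u (Rmax 0 x)))) by (apply Rmult_le_pos; auto).
    assert (0 <= g (Rmax 0 x) * rpow (Rmax 0 (u (Rmax 0 x))) n) by (apply Rmult_le_pos; auto).
    lra. }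
  set (K := m / (m - n)). set (C0 := Rpower c (m / (m - n))).
  assert (HK : 0 < K) by (unfold K; apply Rdiv_lt_0_compat; lra).
  assert (HC0 : 0 < C0) by apply Rpower_gt0.
  pose (Z := fun x => C0 + K * Rint ht 0 x).
  assert (DZ : forall x, derivable_pt_lim Z x (K * ht x)).
  { intros x. unfold Z. eapply d_val. apply d_plus. apply d_const. apply d_scal. apply FTC_glob; auto. ring. }
  assert (HZ0 : Z 0 = C0). { unfold Z. rewrite Rint_00; auto. ring. }
  assert (HZmono : forall a b, 0 <= a <= b -> Z a <= Z b).
  { intros a b Hab. apply (mono_deriv_ge Z (fun x => K * ht x)); try lra.
    intros; apply DZ. intros; apply Rmult_le_pos; auto; lra. }
  assert (HZpos : forall x, 0 <= x -> C0 <= Z x).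
  { intros x Hx. rewrite <- HZ0. apply HZmono; lra. }
  assert (Hint : forall x, 0 <= x -> Rint (fun s => f s * rpow (u s) n * w (u s) + g s * rpow (u s) n) 0 x = Rint ht 0 x).
  { intros x Hx. apply Rint_ext0; auto. intros s Hs. symmetry; apply Hht; lra. }
  assert (HuZ : forall s, 0 <= s -> rpow (u s) m <= Z s).
  { intros s Hs. apply Rle_trans with (Z (alpha s)).
    - unfold Z. rewrite <- Hint by auto. apply Hineq; auto.
    - apply HZmono. split; auto. }
  assert (Huroot : forall s, 0 <= s -> u s <= Rpower (Z s) (1 / m)).
  { intros s Hs. apply root_bound; auto. specialize (HZpos s Hs); lra. }
  pose (G := fun x => Rint gt 0 x). pose (F := fun x => Rint ft 0 x).
  assert (DG : forall x, derivable_pt_lim G x (gt x)) by (intros; apply FTC_glob; auto).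
  assert (DF : forall x, derivable_pt_lim F x (ft x)) by (intros; apply FTC_glob; auto).
  assert (HG0 : G 0 = 0) by (apply Rint_00; auto).
  assert (HF0 : F 0 = 0) by (apply Rint_00; auto).
  assert (Hgt0 : forall x, 0 <= gt x) by (intros; apply Hg0; auto).
  assert (Hft0 : forall x, 0 <= ft x) by (intros; apply Hf0; auto).
  assert (HGmono : forall a b, a <= b -> G a <= G b).
  { intros a b Hab. apply (mono_deriv_ge G gt); auto. }
  assert (HFmono : forall a b, a <= b -> F a <= F b).
  { intros a b Hab. apply (mono_deriv_ge F ft); auto. }
  assert (HGeq : forall x, 0 <= x -> Rint g 0 x = G x).
  { intros x Hx. apply Rint_ext0; auto. intros s Hs. unfold gt; rewrite Hmax; lra. }
  assert (HFeq : forall x, 0 <= x -> Rint f 0 x = F x).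
  { intros x Hx. apply Rint_ext0; auto. intros s Hs. unfold ft; rewrite Hmax; lra. }
  assert (Hmain : forall X, 0 <= X -> Psi m n w (Rpower (Z X) ((m - n) / m)) <= Psi m n w (c + G X) + F X).
  { intros X HX.
    pose (Y := fun x => Rpower (Z x) ((m - n) / m) - G x + G X).
    pose (phi := fun x => Psi m n w (Y x) - F x).
    assert (HZp : forall x, 0 <= x -> 0 < Z x) by (intros x Hx; specialize (HZpos x Hx); lra).
    assert (HYA : forall x, 0 <= x <= X -> Rpower (Z x) ((m - n) / m) <= Y x).
    { intros x Hx. unfold Y. assert (G x <= G X) by (apply HGmono; lra). lra. }
    assert (HYp : forall x, 0 <= x <= X -> 0 < Y x).
    { intros x Hx. specialize (HYA x Hx). assert (H := Rpower_gt0 (Z x) ((m - n) / m)). lra. }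
    pose (phi' := fun x => kk m n w (Y x) * (((m - n) / m * Rpower (Z x) ((m - n) / m - 1)) * (K * ht x) - gt x) - ft x).
    assert (Dphi : forall x, 0 <= x <= X -> derivable_pt_lim phi x (phi' x)).
    { intros x Hx. unfold phi, phi'. apply d_minus; [|apply DF].
      apply (d_comp Y (Psi m n w)).
      - unfold Y. eapply d_val. apply d_plus. apply d_minus.
        apply (d_comp Z (fun z => Rpower z ((m - n) / m))). apply DZ.
        apply derivable_pt_lim_power. apply HZp; lra. apply DG. apply d_const. ring.
      - apply Psi_deriv; auto. }
    assert (Hneg : forall x, 0 <= x <= X -> phi' x <= 0).
    { intros x Hx. unfold phi'.
      assert (HZx : 0 < Z x) by (apply HZp; lra).
      assert (HU : 0 <= u x) by (apply Hu0; lra).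
      rewrite (Hht x) by lra. unfold ft, gt. rewrite (Hmax x) by lra.
      assert (HYx := HYp x Hx). assert (HAY := HYA x Hx).
      unfold kk. rewrite (rpow_pos (Y x)) by auto.
      set (W := w (Rpower (Y x) (1 / (m - n)))).
      assert (HW : 0 < W) by (apply Hwpos; apply Rpower_gt0).
      assert (Hfx : 0 <= f x) by (apply Hf0; lra). assert (Hgx : 0 <= g x) by (apply Hg0; lra).
      assert (HwU : 0 <= w (u x)) by (apply Hw0; auto).
      assert (Hroot := Huroot x (proj1 Hx)).
      assert (Hr : rpow (u x) n <= Rpower (Z x) (n / m)).
      { destruct (Req_dec (u x) 0) as [H0|H0].
        - rewrite H0. unfold rpow. destruct (Req_EM_T 0 0); [|lra]. left; apply Rpower_gt0.
        - rewrite rpow_pos by lra.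
          apply Rle_trans with (Rpower (Rpower (Z x) (1 / m)) n).
          apply Rle_Rpower_l; lra.
          rewrite Rpower_mult. right; f_equal; field; lra. }
      assert (Hr0 : 0 <= rpow (u x) n) by apply rpow_nonneg.
      assert (HwW : w (u x) <= W).
      { unfold W. apply Hwmono; auto.
        apply Rle_trans with (Rpower (Z x) (1 / m)); auto.
        replace (Rpower (Z x) (1 / m)) with (Rpower (Rpower (Z x) ((m - n) / m)) (1 / (m - n))).
        apply Rle_Rpower_l. left; apply Rdiv_lt_0_compat; lra. split; auto. apply Rpower_gt0.
        rewrite Rpower_mult. f_equal. field; lra. }
      set (Q := Rpower (Z x) (n / m)). set (E := Rpower (Z x) ((m - n) / m - 1)).
      assert (HQ : 0 < Q) by apply Rpower_gt0. assert (HE : 0 < E) by apply Rpower_gt0.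
      assert (HEQ : E * Q = 1).
      { unfold E, Q. rewrite <- Rpower_plus. replace ((m - n) / m - 1 + n / m) with 0 by (field; lra).
        apply Rpower_O; auto. }
      assert (Hh : f x * rpow (u x) n * w (u x) + g x * rpow (u x) n <= Q * (f x * W + g x)).
      { assert (H1 : f x * rpow (u x) n <= f x * Q) by (apply Rmult_le_compat_l; auto).
        assert (H2 : f x * rpow (u x) n * w (u x) <= f x * Q * W).
        { apply Rmult_le_compat; auto. apply Rmult_le_pos; auto. }
        assert (H3 : g x * rpow (u x) n <= g x * Q) by (apply Rmult_le_compat_l; auto).
        lra. }
      replace ((m - n) / m * E * (K * (f x * rpow (u x) n * w (u x) + g x * rpow (u x) n)))
        with (E * (f x * rpow (u x) n * w (u x) + g x * rpow (u x) n)) by (unfold K; field; lra).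
      assert (H4 : E * (f x * rpow (u x) n * w (u x) + g x * rpow (u x) n) <= E * (Q * (f x * W + g x)))
        by (apply Rmult_le_compat_l; lra).
      replace (E * (Q * (f x * W + g x))) with (E * Q * (f x * W + g x)) in H4 by ring.
      rewrite HEQ in H4.
      assert (H5 : / W * (E * (f x * rpow (u x) n * w (u x) + g x * rpow (u x) n) - g x) <= / W * (f x * W)).
      { apply Rmult_le_compat_l. left; apply Rinv_0_lt_compat; auto. lra. }
      replace (/ W * (f x * W)) with (f x) in H5 by (field; lra). lra. }
    assert (H := mono_deriv phi phi' 0 X HX Dphi Hneg).
    unfold phi, Y in H. rewrite HZ0, HG0, HF0 in H.
    replace (Rpower C0 ((m - n) / m)) with c in H.
    2:{ unfold C0. rewrite Rpower_mult. replace (m / (m - n) * ((m - n) / m)) with 1 by (field; lra).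
        rewrite Rpower_1; lra. }
    replace (Rpower (Z X) ((m - n) / m) - G X + G X) with (Rpower (Z X) ((m - n) / m)) in H by ring.
    replace (c - 0 + G X) with (c + G X) in H by ring. lra. }
  set (delta := Psi m n w (c + 2) - Psi m n w (c + 1)).
  assert (Hdelta : 0 < delta) by (unfold delta; assert (H := Psi_strict m n w Hwc Hwpos (c+1) (c+2)); lra).
  destruct (cont_eps F 0 delta (dlim_cont _ _ _ (DF 0)) Hdelta) as [d1 [Hd1 Hd1']].
  destruct (cont_eps G 0 1 (dlim_cont _ _ _ (DG 0)) Rlt_0_1) as [d2 [Hd2 Hd2']].
  exists (Rmin d1 d2 / 2). split.
  { assert (0 < Rmin d1 d2) by (apply Rmin_pos; auto). lra. }
  intros t Ht. assert (Hat0 : 0 <= alpha t) by (apply Ha0; lra).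
  assert (Hat : alpha t <= t) by (apply Hale; lra).
  rewrite (HGeq _ Hat0), (HFeq _ Hat0).
  set (X := alpha t) in *.
  assert (H1 := Rmin_l d1 d2). assert (H2 := Rmin_r d1 d2).
  assert (HFX : F X < delta).
  { assert (Rabs (F X - F 0) < delta) by (apply Hd1'; rewrite Rminus_0_r, Rabs_right; lra).
    rewrite HF0, Rminus_0_r in H. unfold Rabs in H; destruct Rcase_abs in H; lra. }
  assert (HGX : G X < 1).
  { assert (Rabs (G X - G 0) < 1) by (apply Hd2'; rewrite Rminus_0_r, Rabs_right; lra).
    rewrite HG0, Rminus_0_r in H. unfold Rabs in H; destruct Rcase_abs in H; lra. }
  assert (HGX0 : 0 <= G X) by (rewrite <- HG0; apply HGmono; auto).
  assert (HFX0 : 0 <= F X) by (rewrite <- HF0; apply HFmono; auto).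
  assert (Hdom : PsiDom m n w (Psi m n w (c + G X) + F X)).
  { unfold PsiDom. destruct (Req_dec (F X) 0) as [HF|HF].
    - exists (c + G X). split. lra. rewrite HF; ring.
    - assert (HcG : 0 < c + G X) by lra.
      assert (HPm : Psi m n w (c + G X) <= Psi m n w (c + 1)) by (apply Psi_mono; auto; lra).
      destruct (IVT_interv (fun y => Psi m n w y - (Psi m n w (c + G X) + F X)) (c + G X) (c + 2)) as [z [Hz1 Hz2]].
      + intros a Ha. apply (continuity_pt_minus (Psi m n w) (fun _ => Psi m n w (c + G X) + F X)).
        apply Psi_cont; auto; lra. apply continuity_pt_const. intros ? ?; auto.
      + lra.
      + lra.
      + unfold delta in HFX. lra.
      + exists z. split; lra. }
  split; auto.
  set (v := Psi m n w (c + G X) + F X) in *.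
  assert (Hy0 : 0 < Psi_inv m n w v /\ Psi m n w (Psi_inv m n w v) = v).
  { unfold Psi_inv. apply epsilon_spec. exact Hdom. }
  destruct Hy0 as [Hy0 Hy0'].
  assert (HZX : C0 <= Z X) by (apply HZpos; auto).
  assert (HA : Rpower (Z X) ((m - n) / m) <= Psi_inv m n w v).
  { apply (Psi_le_inv m n w Hwc Hwpos). apply Rpower_gt0. auto. rewrite Hy0'. apply Hmain; auto. }
  rewrite rpow_pos by auto.
  apply Rle_trans with (Rpower (Z X) (1 / m)).
  { apply root_bound; try lra. apply Hu0; lra. unfold Z. rewrite <- Hint by auto. apply Hineq; lra. }
  replace (Rpower (Z X) (1 / m)) with (Rpower (Rpower (Z X) ((m - n) / m)) (1 / (m - n))).
  apply Rle_Rpower_l. left; apply Rdiv_lt_0_compat; lra. split; auto. apply Rpower_gt0.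
  rewrite Rpower_mult. f_equal. field; lra.
Qed.
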